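(* Let $k\ge4$ be an integer, $\eta\in[\eta_{k+1},\eta_k)$, and $j\ge k$ an integer. Then $\Psi_j(\eta)>0$, where $\Psi_j(\eta)=\sin\eta+|a|^{j-2}\sin((j+1)\eta)$.
   Context: For $\eta\in(0,\pi/3)$ let $|a|=\frac{1}{2\cos\eta}$. For integers $k\ge1$ let $\Phi_k(\eta)=(1-|a|^4)\sin((k-1)\eta)-|a|^3\sin((k-2)\eta)+|a|^k\sin\eta$. For each integer $k\ge4$, $\Phi_k$ has a unique zero in $(\pi/k,\pi/(k-1))$, denoted $\eta_k$. *)

(* Defs.v *)
From Stdlib Require Import Reals.
Open Scope R_scope.

Definition absa (eta : R) : R := 1 / (2 * cos eta).

Definition Phi (k : nat) (eta : R) : R :=
  (1 - absa eta ^ 4) * sin ((INR k - 1) * eta)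
  - absa eta ^ 3 * sin ((INR k - 2) * eta)
  + absa eta ^ k * sin eta.

(* eta_k is characterised as the (unique, by the paper) zero of Phi_k in (pi/k, pi/(k-1)) *)
Definition is_eta_k (k : nat) (x : R) : Prop :=
  PI / INR k < x < PI / (INR k - 1) /\ Phi k x = 0.

Definition Psi (j : nat) (eta : R) : R :=
  sin eta + absa eta ^ (j - 2) * sin ((INR j + 1) * eta).

(* Main.v *)
Require Import Defs.
From Stdlib Require Import Reals Lra Lia Psatz Arith.
Open Scope R_scope.

Lemma sin3 x : sin (3*x) = sin x * (4*cos x^2 - 1).
Proof. replace (3*x) with (2*x + x) by ring. rewrite sin_plus, sin_2a, cos_2a_cos. ring. Qed.

Lemma cos3 x : cos (3*x) = 4*cos x^3 - 3*cos x.
Proof.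
  replace (3*x) with (2*x + x) by ring. rewrite cos_plus, sin_2a, cos_2a_cos.
  assert (Hs : sin x * sin x = 1 - cos x * cos x).
  { pose proof (sin2_cos2 x). unfold Rsqr in *. lra. }
  replace (2 * sin x * cos x * sin x) with (2 * cos x * (sin x * sin x)) by ring.
  rewrite Hs. ring.
Qed.

Lemma sin5 x : sin (5*x) = sin x * (16*cos x^4 - 12*cos x^2 + 1).
Proof.
  replace (5*x) with (3*x + 2*x) by ring.
  rewrite sin_plus, sin3, cos3, sin_2a, cos_2a_cos. ring.
Qed.

Lemma sin6 x : sin (6*x) = 2 * sin x * (4*cos x^2 - 1) * (4*cos x^3 - 3*cos x).
Proof.
  replace (6*x) with (3*x + 3*x) by ring.
  rewrite sin_plus, sin3, cos3. ring.
Qed.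

Lemma lt_div_mul x y d : 0 < d -> x < y / d -> x * d < y.
Proof. intros Hd H. replace y with (y/d*d) by (field; lra).
  apply Rmult_lt_compat_r; auto. Qed.

Lemma div_lt_mul x y d : 0 < d -> y / d < x -> y < x * d.
Proof. intros Hd H. replace y with (y/d*d) by (field; lra).
  apply Rmult_lt_compat_r; auto. Qed.

Lemma pow_mono_dec a m n : 0 < a <= 1 -> (m <= n)%nat -> a ^ n <= a ^ m.
Proof.
  intros Ha Hmn. replace n with (m + (n - m))%nat by lia. rewrite pow_add.
  assert (0 < a ^ m) by (apply pow_lt; lra).
  assert (a ^ (n - m) <= 1).
  { rewrite <- (pow1 (n-m)). apply pow_incr. lra. }
  nra.
Qed.

Lemma ind_bound a : 0 <= a <= 7/8 -> forall n, a ^ (n + 4) * (INR n + 7) <= 7 * a ^ 4.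
Proof.
  intros Ha n. induction n.
  - simpl. lra.
  - rewrite S_INR. replace (S n + 4)%nat with (S (n + 4)) by lia. simpl pow.
    assert (0 <= a ^ (n+4)) by (apply pow_le; lra).
    assert (0 <= INR n) by apply pos_INR.
    assert (a * (INR n + 1 + 7) <= INR n + 7) by nra.
    nra.
Qed.

Lemma PI_gt_2 : 2 < PI.
Proof.
  destruct (Rlt_or_le 2 PI) as [h|h]; auto.
  pose proof PI_RGT_0.
  destruct (COS (PI/2)) as [H1 _]; try lra.
  rewrite cos_PI2 in H1. unfold cos_lb, cos_approx, cos_term in H1. simpl in H1.
  set (x := PI/2) in *. assert (0 < x <= 1) by (unfold x; lra).
  assert (0 < x*x <= 1) by nra.
  assert (x*x*(x*x) <= 1) by nra.
  assert (x*x*(x*x)*(x*x) <= 1) by nra.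
  field_simplify in H1. nra.
Qed.

Lemma Psi_pos_of : forall j eta,
  0 < absa eta -> absa eta ^ (j - 2) < sin eta -> Psi j eta > 0.
Proof.
  intros j eta Ha H. unfold Psi.
  pose proof (SIN_bound ((INR j + 1) * eta)).
  assert (0 < absa eta ^ (j-2)) by (apply pow_lt; lra).
  nra.
Qed.

Lemma Psi4_pos eta : 0 < sin eta -> 1/2 < cos eta -> Psi 4 eta > 0.
Proof.
  intros Hs Hc. unfold Psi, absa.
  replace (4-2)%nat with 2%nat by reflexivity.
  replace ((INR 4 + 1) * eta) with (5 * eta) by (simpl; ring).
  rewrite sin5.
  set (s := sin eta) in *. set (c := cos eta) in *.
  assert (c <> 0) by lra.
  replace (s + (1 / (2 * c)) ^ 2 * (s * (16 * c ^ 4 - 12 * c ^ 2 + 1)))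
    with (s * (4*c^2-1)^2 / (4*c^2)) by (field; auto).
  apply Rdiv_lt_0_compat.
  - apply Rmult_lt_0_compat; auto. apply pow_lt. nra.
  - nra.
Qed.

Lemma Psi5_pos eta : 0 < sin eta -> 1/2 < cos eta -> Psi 5 eta > 0.
Proof.
  intros Hs Hc. unfold Psi, absa.
  replace (5-2)%nat with 3%nat by reflexivity.
  replace ((INR 5 + 1) * eta) with (6 * eta) by (simpl; ring).
  rewrite sin6.
  set (s := sin eta) in *. set (c := cos eta) in *.
  assert (c <> 0) by lra.
  replace (s + (1 / (2 * c)) ^ 3 * (2 * s * (4 * c ^ 2 - 1) * (4 * c ^ 3 - 3 * c)))
    with (s * ((4*c^2)^2 - 3*(4*c^2) + 3) / (4*c^2)) by (field; auto).
  apply Rdiv_lt_0_compat.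
  - apply Rmult_lt_0_compat; auto.
    pose proof (pow2_ge_0 (4*c^2 - 3/2)).
    assert (E : (4*c^2)^2 - 3*(4*c^2) + 3 = (4*c^2 - 3/2)^2 + 3/4) by field.
    lra.
  - nra.
Qed.

Lemma Phi4_root x : 0 < sin x -> 1/2 < cos x -> Phi 4 x = 0 -> 16 * cos x ^ 4 = 2.
Proof.
  intros Hs Hc H. unfold Phi, absa in H.
  replace ((INR 4 - 1) * x) with (3 * x) in H by (simpl; ring).
  replace ((INR 4 - 2) * x) with (2 * x) in H by (simpl; ring).
  rewrite sin3, sin_2a in H.
  set (s := sin x) in *. set (c := cos x) in *.
  assert (c <> 0) by lra.
  assert (E : s * (4*c^2-1) * (16*c^4-2) = 0).
  { replace (s * (4*c^2-1) * (16*c^4-2)) with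
     (16*c^4 * ((1 - (1 / (2 * c)) ^ 4) * (s * (4 * c ^ 2 - 1)) -
      (1 / (2 * c)) ^ 3 * (2 * s * c) + (1 / (2 * c)) ^ 4 * s)) by (field; auto).
    rewrite H. ring. }
  apply Rmult_integral in E. destruct E as [E|E].
  - apply Rmult_integral in E. destruct E as [E|E]; nra.
  - lra.
Qed.

Lemma sq_bound x : 0 < x < PI / 4 -> 1/2 < cos x ^ 2.
Proof.
  intros Hx. assert (H : cos (PI/4) < cos x).
  { apply cos_decreasing_1; pose proof PI_RGT_0; lra. }
  rewrite cos_PI4 in H.
  assert (Hq : (1 / sqrt 2) ^ 2 = 1/2).
  { unfold Rdiv. rewrite Rmult_1_l, pow_inv. simpl. rewrite Rmult_1_r, sqrt_sqrt; lra. }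
  assert (0 < 1 / sqrt 2).
  { apply Rdiv_lt_0_compat; [lra| apply sqrt_lt_R0; lra]. }
  rewrite <- Hq. simpl. nra.
Qed.

Theorem lemma4p4 (k : nat) (etak etak1 eta : R) (j : nat) :
  (4 <= k)%nat ->
  is_eta_k k etak ->
  is_eta_k (S k) etak1 ->
  etak1 <= eta < etak ->
  (k <= j)%nat ->
  Psi j eta > 0.
Proof.
  intros Hk [[Hk1 Hk2] HPk] [[Hs1 Hs2] _] [He1 He2] Hj.
  pose proof PI_RGT_0 as HPI. pose proof PI_4 as HPI4. pose proof PI_gt_2 as HPI2.
  assert (HK : 4 <= INR k) by (apply le_INR in Hk; simpl in Hk; lra).
  rewrite S_INR in Hs1, Hs2.
  apply div_lt_mul in Hs1; [|lra].
  apply lt_div_mul in Hk2; [|lra].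
  assert (Hep : 0 < eta) by nra.
  assert (He3 : eta * (INR k - 1) < PI) by nra.
  assert (He4 : PI < eta * (INR k + 1)) by nra.
  assert (Hc : 1/2 < cos eta).
  { rewrite <- cos_PI3. apply cos_decreasing_1; nra. }
  assert (Hs : 0 < sin eta) by (apply sin_gt_0; nra).
  assert (Ha2 : absa eta * (2 * cos eta) = 1) by (unfold absa; field; lra).
  assert (Ha : 0 < absa eta < 1) by (split; nra).
  destruct (le_lt_dec j 5) as [Hj5|Hj5].
  { assert (j = 4%nat \/ j = 5%nat) as [->| ->] by lia.
    - apply Psi4_pos; auto.
    - apply Psi5_pos; auto. }
  apply Psi_pos_of; [lra|].
  destruct (le_lt_dec k 5) as [Hk5|Hk5].
  - assert (HK5 : INR k <= 5) by (apply le_INR in Hk5; simpl in Hk5; lra).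
    assert (Hsin : 1/2 < sin eta).
    { rewrite <- sin_PI6. apply sin_increasing_1; nra. }
    assert (Ha4 : absa eta ^ 4 < 1/2).
    { assert (k = 4%nat \/ k = 5%nat) as [Ek|Ek] by lia.
      - subst k.
        assert (HK4 : INR 4 = 4) by (simpl; lra). rewrite HK4 in *.
        assert (Hek : 0 < etak) by lra.
        assert (Hck : 1/2 < cos etak).
        { rewrite <- cos_PI3. apply cos_decreasing_1; nra. }
        assert (Hsk : 0 < sin etak) by (apply sin_gt_0; nra).
        pose proof (Phi4_root etak Hsk Hck HPk) as Hr.
        assert (Hcc : cos etak < cos eta) by (apply cos_decreasing_1; nra).
        assert (H2 : cos etak ^ 2 < cos eta ^ 2) by nra.
        assert (H4 : cos etak ^ 4 < cos eta ^ 4).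
        { replace (cos etak ^ 4) with ((cos etak ^ 2)^2) by ring.
          replace (cos eta ^ 4) with ((cos eta ^ 2)^2) by ring. nra. }
        assert (E : absa eta ^ 4 * (16 * cos eta ^ 4) = 1).
        { replace (absa eta ^ 4 * (16 * cos eta ^ 4)) with ((absa eta * (2 * cos eta))^4) by ring.
          rewrite Ha2. ring. }
        assert (0 < absa eta ^ 4) by (apply pow_lt; lra).
        nra.
      - subst k.
        assert (HK5' : INR 5 = 5) by (simpl; lra). rewrite HK5' in *.
        pose proof (sq_bound eta ltac:(split; lra)) as Hq.
        assert (E : absa eta ^ 2 * (4 * cos eta ^ 2) = 1).
        { replace (absa eta ^ 2 * (4 * cos eta ^ 2)) with ((absa eta * (2 * cos eta))^2) by ring.
          rewrite Ha2. ring. }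
        assert (0 < absa eta ^ 2) by (apply pow_lt; lra).
        assert (absa eta ^ 2 < 1/2) by nra.
        replace (absa eta ^ 4) with ((absa eta ^ 2)^2) by ring. nra. }
    pose proof (pow_mono_dec (absa eta) 4 (j-2) ltac:(lra) ltac:(lia)). lra.
  - destruct (Nat.le_exists_sub 6 k ltac:(lia)) as [n [-> _]].
    rewrite plus_INR in *. assert (HI6 : INR 6 = 6) by (simpl; lra). rewrite HI6 in *.
    pose proof (pos_INR n) as Hn.
    pose proof (sq_bound eta ltac:(split; nra)) as Hq.
    assert (E : absa eta ^ 2 * (4 * cos eta ^ 2) = 1).
    { replace (absa eta ^ 2 * (4 * cos eta ^ 2)) with ((absa eta * (2 * cos eta))^2) by ring.
      rewrite Ha2. ring. }
    assert (0 < absa eta ^ 2) by (apply pow_lt; lra).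
    assert (Ha2' : absa eta ^ 2 < 1/2) by nra.
    assert (Ha78 : absa eta <= 7/8) by nra.
    pose proof (ind_bound (absa eta) ltac:(lra) n) as Hib.
    assert (Ha4 : 7 * absa eta ^ 4 < 7/4).
    { replace (absa eta ^ 4) with ((absa eta ^ 2)^2) by ring. nra. }
    assert (Hle : eta <= 4/5) by nra.
    destruct (SIN eta ltac:(lra) ltac:(nra)) as [Hsl _].
    unfold sin_lb, sin_approx, sin_term in Hsl. simpl in Hsl.
    assert (Hsl2 : eta * (67/75) <= sin eta).
    { assert (0 < eta * eta <= 16/25) by nra.
      assert (eta^5/120 - eta^7/5040 >= 0).
      { replace (eta^5/120 - eta^7/5040) with (eta^5 * (42 - eta*eta) / 5040) by field.
        apply Rle_ge. apply Rmult_le_pos; [|lra]. apply Rmult_le_pos; [apply pow_le; lra| lra]. }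
      field_simplify in Hsl. nra. }
    assert (HH : absa eta ^ (n + 4) < sin eta).
    { assert (absa eta ^ (n+4) * (INR n + 7) < sin eta * (INR n + 7)) by nra.
      nra. }
    pose proof (pow_mono_dec (absa eta) (n+4) (j-2) ltac:(lra) ltac:(lia)). lra.
Qed.
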